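(* Let $m\ge2$ and let $\mathcal{A}\in\mathbb{S}_{m,n}$ be strongly completely positive. Then (i) all H-eigenvalues of $\mathcal{A}$ are positive; (ii) all Z-eigenvalues of $\mathcal{A}$ are nonzero; moreover, when $m$ is even all Z-eigenvalues of $\mathcal{A}$ are positive, and when $m$ is odd a Z-eigenvector associated with a positive (respectively negative) Z-eigenvalue of $\mathcal{A}$ is nonnegative (respectively nonpositive).
   Context: $\mathbb{S}_{m,n}$: symmetric real $m$th order $n$-dimensional tensors. $(u^m)_{i_1\ldots i_m}=u_{i_1}\cdots u_{i_m}$; $(\mathcal{A}x^{m-1})_i=\sum_{i_2,\dots,i_m}a_{ii_2\ldots i_m}x_{i_2}\cdots x_{i_m}$; $x^{[m-1]}=(x_i^{m-1})_i$. $\lambda\in\mathbb{R}$ is an H-eigenvalue if $\mathcal{A}x^{m-1}=\lambda x^{[m-1]}$ for some $x\in\mathbb{R}^n\setminus\{0\}$. $\lambda\in\mathbb{R}$ is a Z-eigenvalue with Z-eigenvector $x\in\mathbb{R}^n$ if $\mathcal{A}x^{m-1}=\lambda x$ and $x^Tx=1$. $\mathcal{A}$ is strongly completely positive if $\mathcal{A}=\sum_{k=1}^r(u^{(k)})^m$ with $u^{(k)}\in\mathbb{R}^n_+$ and $\mathrm{span}\{u^{(1)},\dots,u^{(r)}\}=\mathbb{R}^n$. *)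

(* Defs.v *)
From HB Require Import structures.
From mathcomp Require Import all_boot all_order all_algebra all_fingroup.
Set Implicit Arguments. Unset Strict Implicit. Unset Printing Implicit Defensive.
Import Order.TTheory GRing.Theory Num.Theory.
Local Open Scope ring_scope.

Definition tensor (R : Type) (m n : nat) := {ffun 'I_m -> 'I_n} -> R.

Definition symmetric_tensor (R : Type) (m n : nat) (A : tensor R m n) : Prop :=
  forall (idx : {ffun 'I_m -> 'I_n}) (s : 'S_m),
    A [ffun j => idx (s j)] = A idx.

Definition tpow (R : realFieldType) (m n : nat) (u : 'I_n -> R) : tensor R m n :=
  fun idx => \prod_(j < m) u (idx j).

(* (A x^{m-1})_i = sum_{i_2..i_m} a_{i i_2 ... i_m} x_{i_2} ... x_{i_m};
   the first index position is the one with value 0. *)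
Definition tapply (R : realFieldType) (m n : nat) (A : tensor R m n)
  (x : 'I_n -> R) (i : 'I_n) : R :=
  \sum_(idx : {ffun 'I_m -> 'I_n} |
          [forall j : 'I_m, (val j == 0%N) ==> (idx j == i)])
     A idx * \prod_(j : 'I_m | val j != 0%N) x (idx j).

Definition H_eigenvalue (R : realFieldType) (m n : nat) (A : tensor R m n)
  (lambda : R) : Prop :=
  exists x : 'I_n -> R, (exists i, x i != 0) /\
    forall i, tapply A x i = lambda * x i ^+ m.-1.

Definition Z_eigenpair (R : realFieldType) (m n : nat) (A : tensor R m n)
  (lambda : R) (x : 'I_n -> R) : Prop :=
  (forall i, tapply A x i = lambda * x i) /\ \sum_(i < n) x i ^+ 2 = 1.

Definition Z_eigenvalue (R : realFieldType) (m n : nat) (A : tensor R m n)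
  (lambda : R) : Prop :=
  exists x, Z_eigenpair A lambda x.

(* Strongly completely positive: A = sum_k (u^(k))^m with u^(k) >= 0
   entrywise and span{u^(1),...,u^(r)} = R^n (the matrix with rows u^(k)
   is row-full). *)
Definition strongly_completely_positive (R : realFieldType) (m n : nat)
  (A : tensor R m n) : Prop :=
  exists (r : nat) (u : 'I_r -> 'I_n -> R),
    (forall k i, 0 <= u k i) /\
    (forall idx, A idx = \sum_(k < r) @tpow R m n (u k) idx) /\
    row_full (\matrix_(k < r, i < n) u k i).

(* Main.v *)
Require Import Defs.
From HB Require Import structures.
From mathcomp Require Import all_boot all_order all_algebra all_fingroup.
From mathcomp Require Import ring.
Import Order.TTheory GRing.Theory Num.Theory.
Local Open Scope ring_scope.

Lemma rowfull_zero (R : realFieldType) r n (u : 'I_r -> 'I_n -> R) (x : 'I_n -> R) :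
  row_full (\matrix_(k < r, i < n) u k i) ->
  (forall k, \sum_l u k l * x l = 0) -> forall l, x l = 0.
Proof.
move=> hf hz l.
have H : (\matrix_(k < r, i < n) u k i) *m (\col_(i < n) x i) =
         (\matrix_(k < r, i < n) u k i) *m 0.
  rewrite mulmx0; apply/matrixP => k j; rewrite !mxE (ord1 j).
  rewrite -[RHS](hz k); apply: eq_bigr => i _; by rewrite !mxE.
have := congr1 (fun M : 'M_(n,1) => M l ord0) (row_full_inj hf H).
by rewrite !mxE.
Qed.

Lemma sum_prod_fix (R : realFieldType) m n (i : 'I_n) (G : 'I_n -> R) :
  \sum_(idx : {ffun 'I_m.+1 -> 'I_n} | idx ord0 == i)
     \prod_(j < m.+1 | j != ord0) G (idx j) = (\sum_l G l) ^+ m.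
Proof.
have hl : forall j : 'I_m, (lift ord0 j == ord0 :> 'I_m.+1) = false.
  by move=> j; rewrite eq_sym (negbTE (neq_lift _ _)).
pose H (j : 'I_m.+1) (l : 'I_n) := if j == ord0 then (l == i)%:R else G l.
have := bigA_distr_bigA (one := 1) (times := *%R) (plus := +%R) H.
rewrite big_ord_recl /= /H eqxx.
rewrite (bigD1 i) //= eqxx big1 ?addr0; last by move=> l /negbTE ->.
rewrite prodr_const card_ord (_ : true%:R = 1) // mul1r => ->.
rewrite big_mkcond /=; apply: eq_bigr => idx _.
rewrite [RHS]big_ord_recl /=. 
rewrite big_mkcond big_ord_recl /=.
by case: eqP => _; rewrite ?mul1r ?mul0r.
Qed.

Lemma tapply_scp (R : realFieldType) m n r (u : 'I_r -> 'I_n -> R)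
  (A : {ffun 'I_m.+1 -> 'I_n} -> R) (x : 'I_n -> R) (i : 'I_n) :
  (forall idx, A idx = \sum_(k < r) \prod_(j < m.+1) u k (idx j)) ->
  \sum_(idx : {ffun 'I_m.+1 -> 'I_n} |
          [forall j : 'I_m.+1, (val j == 0%N) ==> (idx j == i)])
     A idx * \prod_(j : 'I_m.+1 | val j != 0%N) x (idx j)
  = \sum_(k < r) u k i * (\sum_l u k l * x l) ^+ m.
Proof.
move=> hA.
have hj : forall j : 'I_m.+1, (val j != 0%N) = (j != ord0) by [].
rewrite (eq_bigl (fun idx : {ffun 'I_m.+1 -> 'I_n} => idx ord0 == i)); last first.
  move=> idx; apply/forallP/eqP => [/(_ ord0) /implyP /(_ isT) /eqP //| <- j].
  by apply/implyP => /eqP h; rewrite (_ : j = ord0) //; apply: val_inj.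
under eq_bigr => idx _ do rewrite hA mulr_suml.
rewrite exchange_big /=; apply: eq_bigr => k _.
rewrite -(@sum_prod_fix _ m _ i) mulr_sumr; apply: eq_big => // idx /eqP hi.
rewrite (bigD1 ord0) //= hi -mulrA; congr (_ * _).
rewrite (eq_bigl _ _ hj) -big_split /=; by [].
Qed.

Theorem mainTheorem7 (R : realFieldType) (m n : nat) (A : tensor R m n)
  (hm : (2 <= m)%N) (hsym : symmetric_tensor A)
  (hscp : strongly_completely_positive A) :
  (forall lambda : R, H_eigenvalue A lambda -> 0 < lambda) /\
  (forall lambda : R, Z_eigenvalue A lambda -> lambda != 0) /\
  (~~ odd m -> forall lambda : R, Z_eigenvalue A lambda -> 0 < lambda) /\
  (odd m -> forall (lambda : R) (x : 'I_n -> R), Z_eigenpair A lambda x ->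
     (0 < lambda -> forall i, 0 <= x i) /\
     (lambda < 0 -> forall i, x i <= 0)).
Proof.
case: m A hm hsym hscp => [|m] // A hm _ [r [u [hu [hA hf]]]].
have F1 : forall x i, tapply A x i = \sum_(k < r) u k i * (\sum_l u k l * x l) ^+ m.
  move=> x i; rewrite /tapply; apply: tapply_scp => idx; exact: hA.
have F2 : forall x, \sum_i x i * tapply A x i = \sum_(k < r) (\sum_l u k l * x l) ^+ m.+1.
  move=> x; under eq_bigr => i _ do rewrite F1 mulr_sumr.
  rewrite exchange_big /=; apply: eq_bigr => k _.
  rewrite exprS mulrC mulr_sumr; apply: eq_bigr => i _.
  ring.
have F3 : forall x : 'I_n -> R, (forall k, \sum_l u k l * x l = 0) -> forall l, x l = 0.
  by move=> x; apply: rowfull_zero.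
have F4 : ~~ odd m -> forall x : 'I_n -> R,
    (forall i, \sum_(k < r) u k i * (\sum_l u k l * x l) ^+ m = 0) -> forall l, x l = 0.
  move=> hm' x hz; apply: F3 => k; apply/eqP/negPn/negP => hw.
  have : \sum_l u k l * x l = 0; last by move=> h; rewrite h eqxx in hw.
  apply: big1 => l _.
  have h0 : forall j : 'I_r, true -> 0 <= u j l * (\sum_l0 u j l0 * x l0) ^+ m.
    by move=> j _; rewrite mulr_ge0 // exprn_even_ge0.
  move: (@psumr_eq0P _ _ _ _ h0 (hz l) k isT) => /eqP; rewrite mulf_eq0 expf_eq0 (negbTE hw) andbF orbF.
  by move/eqP ->; rewrite mul0r.
have F5 : odd m -> forall x : 'I_n -> R,
    \sum_(k < r) (\sum_l u k l * x l) ^+ m.+1 = 0 -> forall l, x l = 0.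
  move=> hm' x hz; apply: F3 => k.
  have h0 : forall j : 'I_r, true -> 0 <= (\sum_l u j l * x l) ^+ m.+1.
    by move=> j _; apply: exprn_even_ge0; rewrite /= hm'.
  by move: (@psumr_eq0P _ _ _ _ h0 hz k isT) => /eqP; rewrite expf_eq0 => /eqP.
have X0 : forall x : 'I_n -> R, (forall l, x l = 0) -> \sum_(i < n) x i ^+ 2 = 1 -> False.
  move=> x h; rewrite big1 => [/eqP|i _]; first by rewrite eq_sym oner_eq0.
  by rewrite h expr0n.
have Z0 : forall lambda : R, Z_eigenvalue A lambda -> lambda != 0.
  move=> l [x [hx hs]]; apply/eqP => hl0; subst l.
  case: (boolP (odd m)) => hm'.
    apply: (X0 x) => //; apply: F5 => //; rewrite -F2.
    by apply: big1 => i _; rewrite hx !mul0r mulr0.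
  apply: (X0 x) => //; apply: F4 => // i; by rewrite -F1 hx mul0r.
have EQ : forall (l : R) x, (forall i, tapply A x i = l * x i) ->
    \sum_(i < n) x i ^+ 2 = 1 -> l = \sum_(k < r) (\sum_l0 u k l0 * x l0) ^+ m.+1.
  move=> l x hx hs; rewrite -F2 -[l]mulr1 -hs mulr_sumr; apply: eq_bigr => i _.
  by rewrite hx; ring.
split.
  move=> l [x [[i0 hx0] hx]].
  case: (boolP (odd m)) => hm'.
    have ev : forall y : R, 0 <= y ^+ m.+1 by move=> y; apply: exprn_even_ge0; rewrite /= hm'.
    have E : \sum_(k < r) (\sum_l0 u k l0 * x l0) ^+ m.+1 = l * \sum_i x i ^+ m.+1.
      rewrite -F2 mulr_sumr; apply: eq_bigr => i _; rewrite hx /= exprS; ring.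
    have S1 : 0 < \sum_(k < r) (\sum_l0 u k l0 * x l0) ^+ m.+1.
      rewrite lt_def sumr_ge0 ?andbT //; apply/eqP => h.
      by move: hx0; rewrite (F5 hm' x h) eqxx.
    have S2 : 0 < \sum_i x i ^+ m.+1.
      rewrite lt_def sumr_ge0 ?andbT //; apply/eqP => h.
      have h0 : forall j : 'I_n, true -> 0 <= x j ^+ m.+1 by [].
      move: (@psumr_eq0P _ _ _ _ h0 h i0 isT) => /eqP; rewrite expf_eq0 /=.
      by rewrite (negbTE hx0).
    by move: S1; rewrite E pmulr_lgt0.
  rewrite ltNge; apply/negP => hl.
  move: hx0; rewrite (F4 hm' x) ?eqxx // => i.
  apply/eqP; rewrite eq_le sumr_ge0 ?andbT; last first.
    by move=> k _; rewrite mulr_ge0 // exprn_even_ge0.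
  by rewrite -F1 hx mulr_le0_ge0 // exprn_even_ge0.
split => //.
split.
  move=> /= /negPn hodd l hZ; rewrite lt_def Z0 //=.
  case: hZ => x [hx hs]; rewrite (EQ l x hx hs) sumr_ge0 // => k _.
  by apply: exprn_even_ge0; rewrite /= hodd.
move=> /= hodd l x [hx hs]; split => hl i.
  have : 0 <= l * x i.
    rewrite -hx F1 sumr_ge0 // => k _; by rewrite mulr_ge0 // exprn_even_ge0.
  by rewrite pmulr_rge0.
have : 0 <= l * x i.
  rewrite -hx F1 sumr_ge0 // => k _; by rewrite mulr_ge0 // exprn_even_ge0.
by rewrite nmulr_rge0.
Qed.
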